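(* For every graph $G$ with $m\ge 2$ edges, \[\lambda_1^2+\lambda_2^2\le m+\big(3\,t(G)\big)^{2/3},\] and the inequality is strict if $t(G)>0$.
   Context: $\lambda_1\ge\lambda_2$ denote the two largest eigenvalues of the adjacency matrix of $G$, and $t(G)$ denotes the number of triangles in $G$. *)

(* Defs.v *)
From HB Require Import structures.
From mathcomp Require Import all_boot all_order all_algebra.
From mathcomp Require Import reals exp.
Set Implicit Arguments. Unset Strict Implicit. Unset Printing Implicit Defensive.
Import Order.TTheory GRing.Theory Num.Theory.
Local Open Scope ring_scope.

Definition simple_graph (n : nat) (e : rel 'I_n) : Prop :=
  symmetric e /\ irreflexive e.

Definition num_cliques (n k : nat) (e : rel 'I_n) : nat :=
  #|[set S : {set 'I_n} | (#|S| == k) &&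
       [forall x in S, forall y in S, (x != y) ==> e x y]]|.

Definition num_edges (n : nat) (e : rel 'I_n) : nat := num_cliques 2 e.

Definition num_triangles (n : nat) (e : rel 'I_n) : nat := num_cliques 3 e.

Definition adjmx (R : nzRingType) (n : nat) (e : rel 'I_n) : 'M[R]_n :=
  \matrix_(i, j) (e i j)%:R.

Definition eigen_desc (R : numDomainType) (n : nat) (A : 'M[R]_n) (s : seq R) : Prop :=
  sorted (>=%R) s /\ char_poly A = \prod_(x <- s) ('X - x%:P).

(* Main.v *)
Require Import Defs.
From HB Require Import structures.
From mathcomp Require Import all_boot all_order all_algebra.
From mathcomp Require Import reals exp.
From mathcomp Require Import complex.
From mathcomp Require Import ring lra.
Import Order.TTheory GRing.Theory Num.Theory.
Local Open Scope ring_scope.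
Section RealPart.
Variable R : rcfType.
Implicit Types a b c d p q r u w x z y : R.

Lemma cub_le x c : 0 <= x -> x <= c -> x ^+ 3 <= c * x ^+ 2.
Proof. by move=> h0 h1; rewrite exprS ler_wpM2r // exprn_ge0. Qed.

Lemma cub_lt x c : 0 < x -> x < c -> x ^+ 3 < c * x ^+ 2.
Proof. by move=> h0 h1; rewrite exprS ltr_pM2r // exprn_gt0. Qed.

Lemma sq_le x y : 0 <= y -> x ^+ 2 <= y ^+ 2 -> x <= y.
Proof.
move=> hy hxy; have [//|hlt] := lerP x y.
have : y ^+ 2 < x ^+ 2 by rewrite ltr_pXn2r // ?nnegrE; lra.
lra.
Qed.

Lemma sq_lt x y : 0 <= y -> x ^+ 2 < y ^+ 2 -> x < y.
Proof.
move=> hy hxy; have [hlt|hle] := ltrP x y => //.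
have : y ^+ 2 <= x ^+ 2 by rewrite ler_pXn2r // ?nnegrE; lra.
lra.
Qed.
Lemma PA (a be d : R) : 0 < be -> 0 <= d -> 2 * be <= a -> a * be <= d ^+ 2 ->
  2 * d ^+ 2 <= a ^+ 2 - a * be + 2 * be ^+ 2 ->
  d ^+ 3 < (a + be) * (d ^+ 2 - be ^+ 2).
Proof.
move=> hb hd hba h1 h2.
have ha : 0 < a by lra.
have h3 : 2 * d ^+ 2 <= a ^+ 2.
  have : be * (2 * be - a) <= 0 by nra.
  nra.
have h4 : d <= 5/7 * a.
  rewrite -(@ler_pXn2r _ 2) ?nnegrE //; last by lra.
  nra.
have h5 : d ^+ 3 <= 5/7 * a * d ^+ 2.
  have : d ^+ 3 = d * d ^+ 2 by rewrite exprS.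
  move=> ->. apply: ler_wpM2r; first by nra. done.
have h6 : (a + be) * be ^+ 2 < (2/7 * a + be) * d ^+2.
  have : (2/7 * a + be) * (a * be) <= (2/7 * a + be) * d ^+2.
    apply: ler_wpM2l => //; lra.
  have : be ^+ 2 < 2/7 * a ^+ 2 by nra.
  nra.
nra.
Qed.
Lemma PQ (u w z y : R) : 0 <= u -> u <= w -> w <= z -> u <= y -> y <= z ->
  (w^+2+w*u+u^+2)*(z+y) <= (z^+2+z*y+y^+2)*(w+u).
Proof.
move=> hu huw hwz huy hyz.
set Q := (z^+2+z*y+y^+2)*(w+u) - (w^+2+w*u+u^+2)*(z+y).
have hid : Q * (w+y) = (z-w)*(z*w+y*z+y*w)*(w+u) + (y-u)*(y*u+w*y+w*u)*(z+y).
  rewrite /Q; ring.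
have hpos : 0 <= (z-w)*(z*w+y*z+y*w)*(w+u) + (y-u)*(y*u+w*y+w*u)*(z+y).
  apply: addr_ge0; apply: mulr_ge0; try apply: mulr_ge0; nra.
rewrite -subr_ge0 -/Q.
have [h0|h0] := eqVneq (w+y) 0.
  have hw : w = 0 by lra. have hy : y = 0 by lra. have hu0 : u = 0 by lra.
  rewrite /Q hw hy hu0; nra.
have hwy : 0 < w + y by rewrite lt_def h0; lra.
by rewrite -(pmulr_lge0 _ hwy) hid.
Qed.
Lemma PB (a b d : R) : 0 <= b -> b < d -> b <= a -> 2 * d ^+ 2 <= a ^+ 2 + b ^+ 2 ->
  2 * d ^+ 2 * (d - b) <= (a - b) * a ^+ 2.
Proof.
move=> hb hbd hba hd.
have hda : d <= a by nra.
have k1 : 2 * ((d-b)*(d+b)) <= (a - b) * (a + b) by nra.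
have k2 : (a+b)*d^+2 <= a^+2*(d+b).
  have : (d - a) * ((a+b)*d + a*b) <= 0.
    apply: mulr_le0_ge0; nra.
  nra.
have e1 : 2 * d ^+ 2 * (d - b) * (d + b) = d^+2 * (2 * ((d-b)*(d+b))) by ring.
have k3 : (2 * d ^+ 2 * (d - b)) * (d + b) <= ((a - b) * a ^+ 2) * (d + b).
  rewrite e1.
  have : d^+2 * (2 * ((d-b)*(d+b))) <= d^+2 * ((a - b) * (a + b)).
    apply: ler_wpM2l => //; nra.
  have : d^+2 * ((a-b)*(a+b)) <= (a-b)*(a^+2*(d+b)).
    rewrite mulrCA; apply: ler_wpM2l; lra.
  move=> *; rewrite -mulrA; lra.
rewrite ler_pM2r in k3 => //; lra.
Qed.

Lemma PE (u w z y : R) : 0 <= u -> u <= w -> w <= z -> 0 <= y ->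
  y ^+ 2 + w ^+ 2 = z ^+ 2 + u ^+ 2 -> w ^+ 3 + y ^+ 3 <= z ^+ 3 + u ^+ 3.
Proof.
move=> hu huw hwz hy he.
have hyz : y <= z by nra.
have hyu : u <= y by nra.
have hQ := PQ u w z y hu huw hwz hyu hyz.
set f := z ^+ 2 - y ^+ 2.
have e1 : (z ^+ 3 - y ^+ 3) * ((z + y) * (w + u)) = f * ((z^+2+z*y+y^+2)*(w+u)) by rewrite /f; ring.
have e2 : (w ^+ 3 - u ^+ 3) * ((z + y) * (w + u)) = f * ((w^+2+w*u+u^+2)*(z+y)).
  have -> : f = w ^+ 2 - u ^+ 2 by rewrite /f; lra.
  ring.
have hf : 0 <= f by rewrite /f; nra.
have [h0|h0] := eqVneq ((z + y) * (w + u)) 0.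
  move/eqP: h0; rewrite mulf_eq0 => /orP[] /eqP h0.
    have hz : z = 0 by lra. have hy0 : y = 0 by lra. have hw : w = 0 by lra.
    have hu0 : u = 0 by lra. rewrite hz hy0 hw hu0; lra.
  have hw : w = 0 by lra. have hu0 : u = 0 by lra.
  have hyz' : y = z by move: he; rewrite hw hu0; nra.
  rewrite hw hu0 hyz'; lra.
have hpos : 0 < (z + y) * (w + u) by rewrite lt_def h0 /=; nra.
have : (w ^+ 3 - u ^+ 3) * ((z + y) * (w + u)) <= (z ^+ 3 - y ^+ 3) * ((z + y) * (w + u)).
  by rewrite e1 e2; apply: ler_wpM2l.
rewrite ler_pM2r //; lra.
Qed.

Lemma L1 a b p r d : 0 <= b -> b <= a -> 0 < p -> p <= a -> 0 <= r -> r <= p -> 0 < d ->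
  2 * d ^+ 2 = a ^+ 2 + b ^+ 2 - p ^+ 2 - r ^+ 2 ->
  2 * d ^+ 3 < a ^+ 3 + b ^+ 3 - p ^+ 3 - r ^+ 3.
Proof.
move=> hb hba hp hpa hr hrp hd he.
have [hbp|hpb] := lerP b p.
  set Y := a ^+ 2 + b ^+ 2 - p ^+ 2.
  have hY : 0 <= Y by rewrite /Y; nra.
  set yy := Num.sqrt Y.
  have hyy : 0 <= yy := sqrtr_ge0 _.
  have hyy2 : yy ^+ 2 = Y := sqr_sqrtr hY.
  have hE : p ^+ 3 + yy ^+ 3 <= a ^+ 3 + b ^+ 3.
    apply: PE => //; rewrite hyy2 /Y; ring.
  have hY2 : yy ^+ 2 = r ^+ 2 + 2 * d ^+ 2 by rewrite hyy2 /Y; lra.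
  have hry : r <= yy by apply: sq_le => //; nra.
  have hdy : d < yy by apply: sq_lt => //; nra.
  have k1 : r ^+ 3 <= yy * r ^+ 2 by apply: cub_le.
  have k2 : d ^+ 3 < yy * d ^+ 2 by apply: cub_lt.
  have k3 : yy ^+ 3 = yy * (r ^+ 2 + 2 * d ^+ 2).
    rewrite exprS hyy2 /Y; congr (_ * _); lra.
  nra.
have k1 : p ^+ 3 < b * p ^+ 2 by apply: cub_lt.
have k2 : r ^+ 3 <= b * r ^+ 2 by apply: cub_le => //; lra.
have k3 : 2 * d ^+ 3 <= b * (2 * d ^+ 2) + (a - b) * a ^+ 2.
  have [hdb|hbd] := lerP d b.
    have : d ^+ 3 <= b * d ^+ 2 by apply: cub_le => //; lra.
    have : 0 <= (a - b) * a ^+ 2 by apply: mulr_ge0; nra.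
    lra.
  have := PB a b d hb hbd hba (_ : 2 * d ^+ 2 <= a ^+ 2 + b ^+ 2).
  have -> : 2 * d ^+ 3 = 2 * d ^+ 2 * (d - b) + b * (2 * d ^+ 2) by ring.
  move=> H; have := H ltac:(nra); lra.
have k4 : a ^+ 3 + b ^+ 3 = b * (p ^+ 2 + r ^+ 2 + 2 * d ^+ 2) + (a - b) * a ^+ 2.
  rewrite he; ring.
lra.
Qed.

Lemma L2 a b p r d : 0 <= b -> b <= a -> 0 < p -> p <= a -> p <= r -> 0 < d ->
  2 * d ^+ 2 = a ^+ 2 + b ^+ 2 - p ^+ 2 - r ^+ 2 ->
  2 * d ^+ 3 < a ^+ 3 + b ^+ 3 - p ^+ 3 - p * r ^+ 2.
Proof.
move=> hb hba hp hpa hpr hd he.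
have [hra|har] := lerP r a.
  have := @L1 a b r p d hb hba (lt_le_trans hp hpr) hra (ltW hp) hpr hd ltac:(lra).
  have : p * r ^+ 2 <= r ^+ 3 by rewrite [r ^+ 3]exprS; apply: ler_wpM2r => //; nra.
  lra.
have hpb : p < b by nra.
have hdb : d < b by nra.
have k1 : p ^+ 3 < b * p ^+ 2 by apply: cub_lt.
have k2 : p * r ^+ 2 <= a * a ^+ 2 + b * (r ^+ 2 - a ^+ 2).
  have -> : p * r ^+ 2 = p * a ^+ 2 + p * (r ^+ 2 - a ^+ 2) by ring.
  have : p * a ^+ 2 <= a * a ^+ 2 by apply: ler_wpM2r => //; nra.
  have : p * (r ^+ 2 - a ^+ 2) <= b * (r ^+ 2 - a ^+ 2) by apply: ler_wpM2r; nra.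
  lra.
have k3 : d ^+ 3 <= b * d ^+ 2 by apply: cub_le => //; lra.
have k4 : a ^+ 3 + b ^+ 3 = a * a ^+ 2 + b * (p ^+ 2 + (r ^+ 2 - a ^+ 2) + 2 * d ^+ 2).
  rewrite he; ring.
lra.
Qed.

Lemma ler_sum_mem (r : seq R) (F G : R -> R) :
  (forall x, x \in r -> F x <= G x) -> \sum_(x <- r) F x <= \sum_(x <- r) G x.
Proof. by move=> h; rewrite !(big_seq) ler_sum. Qed.

Lemma sum_sq_le_sq (r : seq R) : (forall x, x \in r -> x <= 0) ->
  \sum_(x <- r) x ^+ 2 <= (\sum_(x <- r) x) ^+ 2.
Proof.
elim: r => [|x r IH] h; first by rewrite !big_nil expr0n.
rewrite !big_cons.
have hx : x <= 0 by apply: h; rewrite mem_head.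
have hr : \sum_(y <- r) y <= 0.
  by rewrite big_seq; apply: sumr_le0 => y yr; apply: h; rewrite in_cons yr orbT.
have h' : forall y, y \in r -> y <= 0 by move=> y yr; apply: h; rewrite in_cons yr orbT.
have := IH h'.
nra.
Qed.

Lemma sum_neg (r : seq R) : r != [::] -> (forall x, x \in r -> x < 0) ->
  \sum_(x <- r) x < 0.
Proof.
case: r => [//|x r] _ h; rewrite big_cons.
have := h x (mem_head _ _).
have : \sum_(y <- r) y <= 0.
  rewrite big_seq; apply: sumr_le0 => z zr.
  by apply: ltW; apply: h; rewrite in_cons zr orbT.
lra.
Qed.

Lemma mem_sq_le (r : seq R) x : x \in r -> x ^+ 2 <= \sum_(y <- r) y ^+ 2.
Proof.
elim: r => [|z r IH] //; rewrite in_cons big_cons => /orP[/eqP ->|xr].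
  by rewrite lerDl sumr_ge0 // => i _; rewrite sqr_ge0.
by have := IH xr; have := sqr_ge0 z; lra.
Qed.

Lemma path_last_min (x : R) (r : seq R) : path >=%R x r ->
  forall y, y \in x :: r -> last x r <= y.
Proof.
elim: r x => [|z r IH] x /=.
  by move=> _ y; rewrite inE => /eqP ->.
move=> /andP[hxz hp] y; rewrite in_cons => /orP[/eqP ->|yr].
  by apply: le_trans (IH z hp z (mem_head _ _)) hxz.
exact: IH.
Qed.

Lemma main_real (s : seq R) :
  sorted >=%R s -> (3 <= size s)%N -> \sum_(x <- s) x = 0 ->
  (forall x, x \in s -> - s`_0 <= x) ->
  0 < s`_0 ^+ 2 + s`_1 ^+ 2 - (\sum_(x <- s) x ^+ 2) / 2 ->
  2 * (Num.sqrt (s`_0 ^+ 2 + s`_1 ^+ 2 - (\sum_(x <- s) x ^+ 2) / 2)) ^+ 3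
    < \sum_(x <- s) x ^+ 3.
Proof.
case: s => [|a [|b c]] //= hsort hsize hsum hperr hy.
set y := _ - _ in hy *.
set d := Num.sqrt y.
have hd2 : d ^+ 2 = y by rewrite sqr_sqrtr // ltW.
have hd : 0 < d by rewrite sqrtr_gt0.
move: hsort => /andP[hab hpc].
rewrite /= in hab.
have geT : transitive (>=%R : rel R) by move=> u v w h1 h2; apply: le_trans h2 h1.
have hcb : forall x, x \in c -> x <= b.
  by move=> x xc; have /allP := order_path_min geT hpc; move=> /(_ x xc).
have hca : forall x, x \in c -> - a <= x.
  by move=> x xc; apply: hperr; rewrite !in_cons xc !orbT.
move: hsum hy; rewrite !big_cons => hsum hy.
rewrite /y !big_cons in hd2 *.
have hc0 : c != [::] by move: hsize; case: (c).
have [hb|hb] := ltrP b 0.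
  set S := \sum_(x <- c) x ^+ 2 in hd2 hy *.
  set Sc := \sum_(x <- c) x in hsum.
  have hSc : Sc = - (a + b) by lra.
  have h1 : (b - a) * S + a * b * Sc <= \sum_(x <- c) x ^+ 3.
    rewrite /S /Sc mulr_sumr mulr_sumr -big_split /=.
    apply: ler_sum_mem => x xc.
    have := hcb x xc; have := hca x xc => h1 h2.
    have : 0 <= x * (x + a) * (x - b).
      apply: mulr_le0 ; last by lra.
      apply: mulr_le0_ge0; lra.
    move=> h; rewrite !mulrA; nra.
  have h2 : b * Sc <= S.
    rewrite /S /Sc mulr_sumr; apply: ler_sum_mem => x xc.
    have := hcb x xc => h.
    have : 0 <= x * (x - b) by apply: mulr_le0; lra.
    nra.
  have h3 : S <= Sc ^+ 2.
    by apply: sum_sq_le_sq => x xc; have := hcb x xc; lra.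
  have hScneg : Sc < 0.
    by apply: sum_neg => // x xc; have := hcb x xc; lra.
  have hPA := @PA a (- b) d ltac:(lra) (ltW hd) ltac:(nra) ltac:(nra) ltac:(nra).
  nra.
clearbody d y.
move: hsize hperr hc0 hpc hcb hca hsum hd2 hy; case/lastP: c => [//|mid w] _ _ _.
rewrite rcons_path => /andP[hpm hwv] hcb hca.
rewrite -cats1 !big_cat !big_seq1 /=.
set v := last b mid in hwv.
have hwv2 : w <= v := hwv.
set M := \sum_(x <- mid) x ^+ 2.
set Tm := \sum_(x <- mid) x ^+ 3.
set Sm := \sum_(x <- mid) x.
move=> hsum hd2 hy.
have hmv : forall x, x \in mid -> v <= x.
  by move=> x xm; apply: path_last_min => //; rewrite in_cons xm orbT.
have hvb : v <= b by apply: path_last_min => //; rewrite mem_head.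
have hw : - a <= w by apply: hca; rewrite mem_rcons mem_head.
have hM : 0 <= M by apply: sumr_ge0 => x _; rewrite sqr_ge0.
have hTm : v * M <= Tm.
  rewrite /M /Tm mulr_sumr; apply: ler_sum_mem => x xm.
  have := hmv x xm => h.
  have : 0 <= x ^+ 2 * (x - v) by apply: mulr_ge0; [rewrite sqr_ge0|lra].
  nra.
have [hv|hv] := lerP 0 v.
  have hSm : 0 <= Sm.
    by rewrite /Sm big_seq; apply: sumr_ge0 => x xm; have := hmv x xm; lra.
  have : (a + b) ^+ 2 <= w ^+ 2 by nra.
  nra.
have hm0 : mid != [::] by move: hv hvb; rewrite /v; case: (mid) => //=; lra.
have hvm : v \in mid.
  by move: hm0; rewrite /v; case: (mid) => [//|x m] _ /=; apply: mem_last.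
have hvM : v ^+ 2 <= M by apply: mem_sq_le.
set p := - w. set q := - v.
set r := Num.sqrt M.
have hr : 0 <= r := sqrtr_ge0 _.
have hr2 : r ^+ 2 = M by rewrite sqr_sqrtr.
have hqr : q <= r by apply: sq_le => //; rewrite hr2 /q sqrrN.
have hq : 0 < q by rewrite /q; lra.
have hqp : q <= p by rewrite /q /p; lra.
have hpa : p <= a by rewrite /p; lra.
have he : 2 * d ^+ 2 = a ^+ 2 + b ^+ 2 - p ^+ 2 - r ^+ 2.
  by rewrite hd2 hr2 /p sqrrN -/M; lra.
have hT : a ^+ 3 + b ^+ 3 - q * M - p ^+ 3 <= a ^+ 3 + (b ^+ 3 + (Tm + w ^+ 3)).
  have -> : w ^+ 3 = - p ^+ 3 by rewrite /p; ring.
  have : - (q * M) = v * M by rewrite /q mulNr opprK.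
  lra.
have [hrp|hpr] := lerP r p.
  have := @L1 a b p r d hb hab ltac:(lra) hpa hr hrp hd he.
  have : q * M <= r ^+ 3 by rewrite exprS hr2; apply: ler_wpM2r.
  lra.
have := @L2 a b p r d hb hab ltac:(lra) hpa (ltW hpr) hd he.
have : q * M <= p * r ^+ 2 by rewrite hr2; apply: ler_wpM2r => //; lra.
lra.
Qed.

End RealPart.


Lemma char_poly_similar (F : fieldType) n (P D : 'M[F]_n) : P \in unitmx ->
  char_poly (invmx P *m D *m P) = char_poly D.
Proof.
move=> Pu.
rewrite /char_poly /char_poly_mx.
set Pc := map_mx polyC P.
have Pcu : Pc \in unitmx by rewrite map_unitmx.
have e1 : map_mx polyC (invmx P *m D *m P) = invmx Pc *m map_mx polyC D *m Pc.
  by rewrite !map_mxM map_invmx.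
have e2 : ('X%:M : 'M[{poly F}]_n) = invmx Pc *m 'X%:M *m Pc.
  by rewrite -mulmxA -scalar_mxC mulmxA mulVmx // mul1mx.
rewrite e1 {1}e2 -mulmxBl -mulmxBr !det_mulmx mulrC mulrA -det_mulmx.
by rewrite mulmxV // det1 mul1r.
Qed.

Section Spec.
Variable C : numClosedFieldType.
Local Open Scope sesquilinear_scope.

Lemma spectral_facts n (A : 'M[C]_n) :
  A ^t* = A -> (forall i j, 0 <= A i j) ->
  exists d : 'rV[C]_n,
   [/\ char_poly A = \prod_(i < n) ('X - (d 0 i)%:P),
       \tr A = \sum_i d 0 i,
       \tr (A *m A) = \sum_i d 0 i ^+ 2,
       \tr (A *m A *m A) = \sum_i d 0 i ^+ 3 &
       forall M, (forall i, d 0 i <= M) -> forall j, `|d 0 j| <= M].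
Proof.
move=> Aher Apos.
have Anorm : A \is normalmx by apply/normalmxP; rewrite Aher.
set P := spectralmx A; set d := spectral_diag A.
have hA : A = invmx P *m diag_mx d *m P by apply/orthomx_spectralP.
have Pu : P \is unitarymx by apply: spectral_unitarymx.
have Punit : P \in unitmx by apply: unitarymx_unit.
have hPi : invmx P = P ^t* by apply: invmx_unitary.
have PPs : P *m P ^t* = 1%:M by apply/unitarymxP.
have PsP : P ^t* *m P = 1%:M by rewrite -hPi mulVmx.
have trc : forall X, \tr (invmx P *m X *m P) = \tr X.
  by move=> X; rewrite mxtrace_mulC mulmxA mulmxV // mul1mx.
have AA : A *m A = invmx P *m (diag_mx d *m diag_mx d) *m P.
  rewrite hA -!mulmxA; congr (_ *m _); congr (_ *m _).
  by rewrite !mulmxA mulmxV // mul1mx.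
have AAA : A *m A *m A = invmx P *m (diag_mx d *m diag_mx d *m diag_mx d) *m P.
  rewrite AA [in X in _ *m X]hA -!mulmxA; congr (_ *m _); congr (_ *m _); congr (_ *m _).
  by rewrite !mulmxA mulmxV // mul1mx.
exists d; split.
- by rewrite hA char_poly_similar // char_poly_trig ?diag_mx_is_trig //;
    apply: eq_bigr => i _; rewrite mxE eqxx.
- by rewrite hA trc mxtrace_diag.
- rewrite AA trc mulmx_diag mxtrace_diag; apply: eq_bigr => i _.
  by rewrite mxE expr2.
- rewrite AAA trc !mulmx_diag mxtrace_diag; apply: eq_bigr => i _.
  by rewrite !mxE exprS expr2 mulrA.
- move=> M hM j.
  have trmxCM : forall m p q (X : 'M[C]_(m, p)) (Y : 'M[C]_(p, q)),
      (X *m Y) ^t* = Y ^t* *m X ^t*.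
    by move=> m p q X Y; rewrite trmx_mul map_mxM.
  have ray : forall x : 'rV[C]_n,
      (x *m A *m x ^t*) 0 0 <= M * (x *m x ^t*) 0 0.
    move=> x.
    set z := x *m P ^t*.
    have hz : P *m x ^t* = z ^t* by rewrite /z trmxCM trmxCK.
    have e1 : x *m A *m x ^t* = z *m diag_mx d *m z ^t*.
      by rewrite hA hPi !mulmxA -/z -!mulmxA hz.
    have e2 : x *m x ^t* = z *m z ^t*.
      by rewrite -hz /z !mulmxA -[x *m _ *m P]mulmxA PsP mulmx1.
    rewrite e1 e2 mul_mx_diag !mxE mulr_sumr.
    apply: ler_sum => k _; rewrite !mxE.
    set w := \sum_(_ < _) _.
    rewrite mulrAC [M * _]mulrC; apply: ler_wpM2l => //.
    by rewrite mul_conjC_ge0.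
  set u := row j P.
  set v := map_mx (fun c => `|c|) u.
  have PA : P *m A = diag_mx d *m P by rewrite hA !mulmxA mulmxV // mul1mx.
  have uA : u *m A = d 0 j *: u.
    by rewrite /u -row_mul PA mul_diag_mx; apply/rowP => k; rewrite !mxE.
  have uu : (u *m u ^t*) 0 0 = 1.
    have := PPs; move/matrixP/(_ j j); rewrite !mxE eqxx mulr1n => <-.
    by apply: eq_bigr => k _; rewrite !mxE.
  have dj : d 0 j = (u *m A *m u ^t*) 0 0.
    by rewrite uA -scalemxAl mxE uu mulr1.
  have vv : (v *m v ^t*) 0 0 = 1.
    rewrite -uu !mxE; apply: eq_bigr => k _; rewrite !mxE.
    by rewrite geC0_conj // -normCK.
  have tri : `|(u *m A *m u ^t*) 0 0| <= (v *m A *m v ^t*) 0 0.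
    rewrite !mxE; apply: le_trans (ler_norm_sum _ _ _) _.
    apply: ler_sum => k _; rewrite normrM !mxE norm_conjC geC0_conj //.
    apply: ler_wpM2r => //.
    apply: le_trans (ler_norm_sum _ _ _) _.
    apply: ler_sum => i _; rewrite normrM !mxE (ger0_norm (Apos i k)).
    done.
  by rewrite dj; apply: le_trans tri _; have := ray v; rewrite vv mulr1.
Qed.

Lemma adj_spectral n (e : rel 'I_n) : symmetric e ->
  exists d : 'rV[C]_n,
   [/\ char_poly (adjmx C e) = \prod_(i < n) ('X - (d 0 i)%:P),
       \tr (adjmx C e) = \sum_i d 0 i,
       \tr (adjmx C e *m adjmx C e) = \sum_i d 0 i ^+ 2,
       \tr (adjmx C e *m adjmx C e *m adjmx C e) = \sum_i d 0 i ^+ 3 &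
       forall M, (forall i, d 0 i <= M) -> forall j, `|d 0 j| <= M].
Proof.
move=> sym; apply: spectral_facts.
  by apply/matrixP => i j; rewrite !mxE conjC_nat sym.
by move=> i j; rewrite mxE ler0n.
Qed.
End Spec.



Set Implicit Arguments. Unset Strict Implicit. Unset Printing Implicit Defensive.

Definition cl_ok n k (e : rel 'I_n) (f : {ffun 'I_k -> 'I_n}) :=
  [forall i, forall j, (i != j) ==> e (f i) (f j)].

Lemma count_cl n k (e : rel 'I_n) : irreflexive e ->
  #|[set f : {ffun 'I_k -> 'I_n} | cl_ok e f]| = (k`! * num_cliques k e)%N.
Proof.
move=> irr.
set Cl := [set S : {set 'I_n} | (#|S| == k) &&
       [forall x in S, forall y in S, (x != y) ==> e x y]].
have okinj : forall f : {ffun 'I_k -> 'I_n}, cl_ok e f -> injective f.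
  move=> f okf i j hij; case: (eqVneq i j) => // hne.
  by have := implyP (forallP (forallP okf i) j) hne; rewrite hij irr.
have imcard : forall f : {ffun 'I_k -> 'I_n}, cl_ok e f -> #|[set f x | x in 'I_k]| = k.
  by move=> f /okinj fi; rewrite card_imset // card_ord.
rewrite -sum1_card (partition_big (fun f : {ffun 'I_k -> 'I_n} => [set f x | x in 'I_k]) (mem Cl)) /=; last first.
  move=> f; rewrite inE => okf; rewrite inE imcard // eqxx /=.
  apply/forallP => x; apply/implyP => /imsetP[i _ ->].
  apply/forallP => y; apply/implyP => /imsetP[j _ ->].
  apply/implyP => hne; apply: (implyP (forallP (forallP okf i) j)).
  by apply/eqP => hij; move: hne; rewrite hij eqxx.
rewrite /num_cliques -/Cl mulnC -sum_nat_const.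
apply: eq_bigr => S SCl.
have /andP[/eqP cS clS] : (#|S| == k) && [forall x in S, forall y in S, (x != y) ==> e x y].
  by move: SCl; rewrite inE.
have -> : k`! = #|S| ^_ #|'I_k| by rewrite card_ord cS ffactnn.
rewrite -card_inj_ffuns_on -sum1_card.
apply: eq_bigl => f; rewrite !inE.
apply/andP/andP => [[okf /eqP imf]|[fon finj]].
  split; last by apply/injectiveP; apply: okinj.
  by apply/ffun_onP => x; rewrite -imf imset_f.
have fi : injective f by apply/injectiveP.
have sub : [set f x | x in 'I_k] \subset S.
  by apply/subsetP => y /imsetP[x _ ->]; apply: (ffun_onP fon).
have imS : [set f x | x in 'I_k] = S.
  apply/eqP; rewrite eqEcard sub /= card_imset // card_ord cS //.
split; last by rewrite imS.
apply/forallP => i; apply/forallP => j; apply/implyP => hij.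
have hi : f i \in S by apply: (ffun_onP fon).
have hj : f j \in S by apply: (ffun_onP fon).
have H := implyP (forallP (implyP (forallP clS (f i)) hi) (f j)) hj.
by apply: (implyP H); rewrite (inj_eq fi).
Qed.

Lemma card_sum_bool (T : finType) (P : pred T) : #|[set x | P x]| = (\sum_x (P x : nat))%N.
Proof. by rewrite -sum1_card big_mkcond /=; apply: eq_bigr => x _; rewrite inE; case: (P x). Qed.

Lemma ord2_cases (x : 'I_2) : x = ord0 \/ x = ord_max.
Proof. by case: x => [[|[|//]]] p; [left|right]; apply: val_inj. Qed.

Lemma ord3_cases (x : 'I_3) : [\/ x = 0%R, x = 1%R | x = 2%R].
Proof. by case: x => [[|[|[|//]]]] p; [apply: Or31|apply: Or32|apply: Or33]; apply: val_inj. Qed.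

Lemma cnt2 n (e : rel 'I_n) : symmetric e -> irreflexive e ->
  (\sum_i \sum_j (e i j : nat))%N = #|[set f : {ffun 'I_2 -> 'I_n} | cl_ok e f]|.
Proof.
move=> sym irr.
rewrite card_sum_bool pair_big /=.
pose h (p : 'I_n * 'I_n) : {ffun 'I_2 -> 'I_n} := [ffun x => if x == ord0 then p.1 else p.2].
pose g (f : {ffun 'I_2 -> 'I_n}) := (f ord0, f ord_max).
have hK : cancel h g by move=> [i j]; rewrite /g /h !ffunE.
have gK : cancel g h.
  move=> f; apply/ffunP => x; rewrite /h /g ffunE.
  by case: (ord2_cases x) => ->.
rewrite (reindex h); last by exists g => ? _; [apply: hK|apply: gK].
apply: eq_bigr => [[i j]] _ /=; congr nat_of_bool.
apply/idP/forallP => [hij x|H]; last first.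
  by have := implyP (forallP (H ord0) ord_max) isT; rewrite /h !ffunE.
apply/forallP => y; apply/implyP => hxy.
case: (ord2_cases x) hxy => ->; case: (ord2_cases y) => -> //= _; rewrite /h !ffunE //=.
by rewrite sym.
Qed.

Lemma cnt3 n (e : rel 'I_n) : symmetric e -> irreflexive e ->
  (\sum_i \sum_j \sum_k (e i j && e j k && e k i : nat))%N
     = #|[set f : {ffun 'I_3 -> 'I_n} | cl_ok e f]|.
Proof.
move=> sym irr.
rewrite card_sum_bool.
under eq_bigr do rewrite pair_big /=.
rewrite pair_big /=.
pose h (p : 'I_n * ('I_n * 'I_n)) : {ffun 'I_3 -> 'I_n} :=
  [ffun x => if x == 0%R then p.1 else if x == 1%R then p.2.1 else p.2.2].
pose g (f : {ffun 'I_3 -> 'I_n}) := (f 0%R, (f 1%R, f 2%R)).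
have hK : cancel h g by move=> [i [j k]]; rewrite /g /h !ffunE.
have gK : cancel g h.
  move=> f; apply/ffunP => x; rewrite /h /g ffunE.
  by case: (ord3_cases x) => ->.
rewrite (reindex h); last by exists g => ? _; [apply: hK|apply: gK].
apply: eq_bigr => [[i [j k]]] _ /=; congr nat_of_bool.
apply/idP/forallP => [H x|H]; last first.
  have h01 := implyP (forallP (H 0%R) 1%R) isT.
  have h12 := implyP (forallP (H 1%R) 2%R) isT.
  have h20 := implyP (forallP (H 2%R) 0%R) isT.
  by move: h01 h12 h20; rewrite /h !ffunE /= => -> -> ->.
move: H => /andP[/andP[hij hjk] hki].
apply/forallP => y; apply/implyP => hxy.
case: (ord3_cases x) hxy => ->; case: (ord3_cases y) => -> //= _; rewrite /h !ffunE //=;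
  by rewrite ?hij ?hjk ?hki // sym ?hij ?hjk ?hki.
Qed.


Section Traces.
Variable R : nzRingType.
Variables (n : nat) (e : rel 'I_n).
Hypothesis sym : symmetric e.
Hypothesis irr : irreflexive e.
Let A := adjmx R e.

Lemma boolRM (b c : bool) : (b%:R * c%:R : R) = (b && c)%:R.
Proof. by case: b; case: c; rewrite ?mul1r ?mul0r. Qed.

Lemma tr_adj1 : \tr A = 0.
Proof. by rewrite /mxtrace big1 // => i _; rewrite mxE irr. Qed.

Lemma tr_adj2 : \tr (A *m A) = (2 * num_edges e)%:R.
Proof.
rewrite /num_edges -[(2 * _)%N]/(2`! * num_cliques 2 e)%N -count_cl // -cnt2 // natr_sum /mxtrace.
apply: eq_bigr => i _; rewrite mxE natr_sum; apply: eq_bigr => j _.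
by rewrite !mxE boolRM (sym j i) andbb.
Qed.

Lemma tr_adj3 : \tr (A *m A *m A) = (6 * num_triangles e)%:R.
Proof.
rewrite /num_triangles -[(6 * _)%N]/(3`! * num_cliques 3 e)%N -count_cl // -cnt3 // natr_sum /mxtrace.
apply: eq_bigr => i _; rewrite mxE natr_sum.
transitivity (\sum_j \sum_k (A i k * A k j * A j i)).
  by apply: eq_bigr => j _; rewrite mxE big_distrl.
rewrite exchange_big /=; apply: eq_bigr => j _; rewrite natr_sum.
apply: eq_bigr => k _.
by rewrite !mxE !boolRM.
Qed.
End Traces.

Lemma sorted_head_max (R : realDomainType) (s : seq R) : sorted >=%R s ->
  forall x, x \in s -> x <= s`_0.
Proof.
case: s => [//|a s] /= hp x; rewrite in_cons => /orP[/eqP -> //|xs].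
have geT : transitive (>=%R : rel R) by move=> u v w h1 h2; apply: le_trans h2 h1.
by have /allP := order_path_min geT hp; move=> /(_ x xs).
Qed.

Lemma n_ge3 n (e : rel 'I_n) : (2 <= num_edges e)%N -> (3 <= n)%N.
Proof.
move=> h.
have : (num_edges e <= 'C(n, 2))%N.
  rewrite /num_edges /num_cliques -[X in (_ <= 'C(X, _))%N](card_ord n) -card_draws.
  apply: subset_leq_card; apply/subsetP => S; rewrite !inE => /andP[-> _] //.
move=> h'; have := leq_trans h h'; case: (n) => [|[|[|k]]] //=.
Qed.

Lemma hz3 (R : realType) (k : nat) : ((k%:R : R) `^ (2 / 3 : R)) ^+ 3 = (k%:R : R) ^+ 2.
Proof.
rewrite -(powR_mulrn 3 (powR_ge0 _ _)) -powRrM.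
have -> : (2 / 3 * 3%:R : R) = 2%:R.
  by rewrite -mulrA mulVf ?mulr1 // pnatr_eq0.
by rewrite powR_mulrn // ler0n.
Qed.

Lemma final_step (R : realType) (a b : R) (me nt : nat) (Q T : R) :
  Q = (2 * me)%:R -> T = (6 * nt)%:R ->
  (0 < a ^+ 2 + b ^+ 2 - Q / 2 -> 2 * Num.sqrt (a ^+ 2 + b ^+ 2 - Q / 2) ^+ 3 < T) ->
  a ^+ 2 + b ^+ 2 <= me%:R + (3 * nt)%:R `^ (2 / 3 : R) /\
  ((0 < nt)%N -> a ^+ 2 + b ^+ 2 < me%:R + (3 * nt)%:R `^ (2 / 3 : R)).
Proof.
move=> hQ hT hmain.
set z := ((3 * nt)%:R : R) `^ (2 / 3 : R).
have hz0 : 0 <= z := powR_ge0 _ _.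
have hz3' : z ^+ 3 = ((3 * nt)%:R : R) ^+ 2 by apply: hz3.
have hm2 : Q / 2 = me%:R.
  by rewrite hQ natrM mulrAC mulfV ?mul1r // pnatr_eq0.
have key : a ^+ 2 + b ^+ 2 <= me%:R \/ a ^+ 2 + b ^+ 2 < me%:R + z.
  have [hy|hy] := lerP (a ^+ 2 + b ^+ 2 - Q / 2) 0.
    by left; rewrite hm2 in hy; lra.
  right.
  have := hmain hy.
  rewrite hm2 hT; rewrite hm2 in hy.
  set y := a ^+ 2 + b ^+ 2 - _ in hy *.
  move=> hlt.
  have hsy : 0 <= Num.sqrt y := sqrtr_ge0 _.
  have hsy2 : Num.sqrt y ^+ 2 = y by rewrite sqr_sqrtr // ltW.
  have h3 : Num.sqrt y ^+ 3 < (3 * nt)%:R.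
    have e6 : ((6 * nt)%:R : R) = 2 * (3 * nt)%:R by rewrite -natrM mulnA.
    rewrite e6 in hlt; lra.
  have h6 : y ^+ 3 < z ^+ 3.
    rewrite hz3'.
    have -> : y ^+ 3 = (Num.sqrt y ^+ 3) ^+ 2 by rewrite -exprM mulnC exprM hsy2.
    rewrite ltr_pXn2r // ?nnegrE ?exprn_ge0 ?ler0n //.
  have : y < z by move: h6; rewrite ltr_pXn2r // ?nnegrE; lra.
  rewrite /y; lra.
split.
  by case: key => h; lra.
move=> ht.
have hzpos : 0 < z by rewrite powR_gt0 // ltr0n muln_gt0.
by case: key => h; lra.
Qed.

Unset Implicit Arguments.

Theorem theorem3p1 (R : realType) (n : nat) (e : rel 'I_n) (s : seq R) :
  simple_graph e ->
  (2 <= num_edges e)%N ->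
  eigen_desc (adjmx R e) s ->
  let lambda1 := s`_0 in
  let lambda2 := s`_1 in
  let m := (num_edges e)%:R : R in
  let t := num_triangles e in
  lambda1 ^+ 2 + lambda2 ^+ 2 <= m + (3 * t)%:R `^ (2 / 3 : R) /\
  ((0 < t)%N -> lambda1 ^+ 2 + lambda2 ^+ 2 < m + (3 * t)%:R `^ (2 / 3 : R)).
Proof.
move=> [sym irr] hm [hsort hchar] l1 l2 m t.
have hn := n_ge3 hm.
have hsz : size s = n.
  have := size_char_poly (adjmx R e); rewrite hchar size_prod_XsubC.
  by case.
have [d [hcd htr1 htr2 htr3 hper]] := @adj_spectral R[i] n e sym.
have hcC : char_poly (adjmx R[i] e) = \prod_(y <- map (real_complex R) s) ('X - y%:P).
  have -> : adjmx R[i] e = map_mx (real_complex R) (adjmx R e).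
    by apply/matrixP => i j; rewrite !mxE rmorph_nat.
  rewrite -map_char_poly hchar rmorph_prod big_map; apply: eq_bigr => x _.
  by rewrite /= map_polyXsubC.
have hperm : perm_eq (map (real_complex R) s) (map (d 0) (enum 'I_n)).
  by apply: prod_XsubC_eq; rewrite -hcC hcd big_map big_enum.
have hsumk : forall k, real_complex R (\sum_(x <- s) x ^+ k) = \sum_i d 0 i ^+ k.
  move=> k; rewrite rmorph_sum /=.
  under eq_bigr do rewrite rmorphXn.
  rewrite -(big_map (real_complex R) xpredT (fun y => y ^+ k)) (perm_big _ hperm).
  by rewrite big_map big_enum.
have rcI := @complexI R.
have hs1 : \sum_(x <- s) x = 0.
  have e1 : \sum_(x <- s) x = \sum_(x <- s) x ^+ 1 by apply: eq_bigr => x _; rewrite expr1.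
  apply: rcI; rewrite rmorph0 e1 hsumk.
  under eq_bigr do rewrite expr1.
  by rewrite -htr1 tr_adj1.
have hs2 : \sum_(x <- s) x ^+ 2 = (2 * num_edges e)%:R.
  by apply: rcI; rewrite hsumk -htr2 tr_adj2 // rmorph_nat.
have hs3 : \sum_(x <- s) x ^+ 3 = (6 * num_triangles e)%:R.
  by apply: rcI; rewrite hsumk -htr3 tr_adj3 // rmorph_nat.
have hperr : forall x, x \in s -> - s`_0 <= x.
  have hM : forall i, d 0 i <= real_complex R s`_0.
    move=> i; have : d 0 i \in map (real_complex R) s.
      by rewrite (perm_mem hperm); apply: map_f; rewrite mem_enum.
    case/mapP => x xs ->; rewrite lecR; exact: sorted_head_max.
  move=> x xs.
  have : real_complex R x \in map (d 0) (enum 'I_n).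
    by rewrite -(perm_mem hperm); apply: map_f.
  case/mapP => j _ hj.
  have := hper _ hM j; rewrite -hj => h.
  have : real_complex R (- x) <= real_complex R s`_0.
    apply: le_trans h; rewrite -normrN -rmorphN; apply: real_ler_norm.
    by rewrite complex_real.
  rewrite lecR; lra.
rewrite /l1 /l2 /m /t.
apply: (final_step hs2 hs3) => hy.
apply: main_real => //; by rewrite hsz.
Qed.
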